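(* Let $d\ge 1$ and $n\ge 1$ be integers. Let $v_1,\ldots,v_n\in\mathbb{R}^d$ be non-zero vectors with $\|v_i\|_2\le 1$ for all $i$, let $\varepsilon_1,\ldots,\varepsilon_n$ be independent Rademacher random variables, and set $S_n=v_1\varepsilon_1+\cdots+v_n\varepsilon_n$. Let $R_n=\varepsilon_1+\cdots+\varepsilon_n$. Then for every non-zero $x\in\mathbb{R}^d$, $$\mathbb{P}(S_n=x)\le \mathbb{P}(R_n=k+\delta_{n,k})=\binom{n}{\lceil \frac{n+k}{2}\rceil}\Big/2^n,$$ where $k=\lceil \|x\|_2\rceil$ is the upper integer part of $\|x\|_2$.
   Context: A Rademacher random variable $\varepsilon$ satisfies $\mathbb{P}(\varepsilon=1)=\mathbb{P}(\varepsilon=-1)=\tfrac12$. For integers $n,k$, $\delta_{n,k}$ is defined to be $0$ if $n+k$ is even and $1$ otherwise. *)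

(* Defs.v *)
From mathcomp Require Import all_boot all_order all_algebra.
From mathcomp Require Import reals.
Set Implicit Arguments. Unset Strict Implicit. Unset Printing Implicit Defensive.
Import Order.TTheory GRing.Theory Num.Theory.
Local Open Scope ring_scope.

Section Defs.
Variable R : realType.

Definition enorm (d : nat) (x : 'rV[R]_d) : R :=
  Num.sqrt (\sum_(j < d) x 0 j ^+ 2).

Definition rad (b : bool) : R := if b then 1 else -1.

(* The sample space of n independent Rademacher variables is the finite set
   {ffun 'I_n -> bool} with the uniform (product) probability. *)
Definition prob (n : nat) (E : pred {ffun 'I_n -> bool}) : R :=
  #|E|%:R / 2 ^+ n.

Definition Sn (d n : nat) (v : 'I_n -> 'rV[R]_d) (e : {ffun 'I_n -> bool}) : 'rV[R]_d :=
  \sum_(i < n) rad (e i) *: v i.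

Definition Rn (n : nat) (e : {ffun 'I_n -> bool}) : R :=
  \sum_(i < n) rad (e i).
End Defs.

Definition delta (n k : nat) : nat := odd (n + k).

(* Main.v *)
From Pilot Require Import Defs.
From mathcomp Require Import all_boot all_order all_algebra.
From mathcomp Require Import reals zify ring lra.
Set Implicit Arguments. Unset Strict Implicit. Unset Printing Implicit Defensive.
Import Order.TTheory GRing.Theory Num.Theory.
Local Open Scope ring_scope.

Section OneD.
Variable R : realType.
Local Notation sg := (@Pilot.Defs.rad R).

Definition ext n (i0 : 'I_n.+1) (b : bool) (f : {ffun 'I_n -> bool}) : {ffun 'I_n.+1 -> bool} :=
  [ffun i => if unlift i0 i is Some j then f j else b].
Definition res n (i0 : 'I_n.+1) (e : {ffun 'I_n.+1 -> bool}) : bool * {ffun 'I_n -> bool} :=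
  (e i0, [ffun j => e (lift i0 j)]).

Lemma eq_helper (a s X : R) : (a + s == X) = (s == X - a).
Proof. by rewrite [RHS]eq_sym subr_eq addrC eq_sym. Qed.

Lemma split_card n (i0 : 'I_n.+1) (a : 'I_n.+1 -> R) (X : R) :
  #|[pred e : {ffun 'I_n.+1 -> bool} | \sum_i sg (e i) * a i == X]| =
  (#|[pred f : {ffun 'I_n -> bool} | (\sum_j sg (f j) * a (lift i0 j))%R == (X - a i0)%R]| +
   #|[pred f : {ffun 'I_n -> bool} | (\sum_j sg (f j) * a (lift i0 j))%R == (X + a i0)%R]|)%N.
Proof.
rewrite -!sum1_card.
rewrite (reindex (fun p : bool * {ffun 'I_n -> bool} => ext i0 p.1 p.2)) /=; last first.
  exists (res i0) => [[b f] _|e _].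
    rewrite /res /ext /= ffunE unlift_none; congr pair; apply/ffunP => j.
    by rewrite !ffunE liftK.
  apply/ffunP => i; rewrite /res /ext ffunE /=.
  by case: unliftP => [j ->|->]; rewrite ?ffunE.
have E : forall b f, \sum_i sg (ext i0 b f i) * a i =
   sg b * a i0 + \sum_j sg (f j) * a (lift i0 j).
  move=> b f; rewrite (bigD1_ord i0) //= /ext ffunE unlift_none; congr (_ + _).
  by apply: eq_bigr => j _; rewrite ffunE liftK.
rewrite big_mkcond /=.
rewrite -(pair_bigA _ (fun b f => if ext i0 b f \in [pred e : {ffun 'I_n.+1 -> bool} | (\sum_(i < n.+1) sg (e i) * a i)%R == X] then 1%N else 0%N)) /=.
rewrite big_bool /=; congr addn; rewrite [RHS]big_mkcond; apply: eq_bigr => f _;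
  rewrite !inE E.
  by rewrite [sg true]/= mul1r eq_helper.
by rewrite [sg false]/= mulN1r eq_helper opprK.
Qed.

Lemma absPM (X b : R) :
  (`|X| + `|b| = `|X - b| /\ `|X| - `|b| <= `|X + b|) \/
  (`|X| + `|b| = `|X + b| /\ `|X| - `|b| <= `|X - b|).
Proof.
have h1 := lerB_normD X b; have h2 := lerB_dist X b.
case: (lerP 0 X) => hX; case: (lerP 0 b) => hb.
- right; split => //; rewrite !ger0_norm //; exact: addr_ge0.
- left; split => //; rewrite (ger0_norm hX) (ltr0_norm hb) ger0_norm //.
  by rewrite subr_ge0; apply: ltW; apply: lt_le_trans hX.
- left; split => //; rewrite (ltr0_norm hX) (ger0_norm hb) ltr0_norm.
    by rewrite opprB addrC.
  by rewrite subr_lt0; apply: lt_le_trans hb.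
- right; split => //; rewrite (ltr0_norm hX) (ltr0_norm hb) ltr0_norm ?opprD //.
  by rewrite -(addr0 0) ltrD.
Qed.

Lemma binL1 n k : ('C(n, uphalf (n + k.+2)) + 'C(n, uphalf (n + k)))%N =
  'C(n.+1, uphalf (n.+1 + k.+1)).
Proof. by rewrite addSn !addnS /= binS. Qed.

Lemma binL0 n : ('C(n, uphalf (n + 1)) + 'C(n, uphalf (n + 0)))%N =
  'C(n.+1, uphalf (n.+1 + 0)).
Proof.
rewrite !addn0 addn1 /= binS; congr addn.
rewrite uphalf_half; case: (boolP (odd n)) => hn //=.
have hn2 := odd_double_half n; rewrite hn /= in hn2.
rewrite -[in RHS](@bin_sub n n./2); last by rewrite -{2}hn2 -addnn; lia.
congr 'C(_, _); rewrite -{2}hn2 -addnn; lia.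
Qed.

Definition cnt n (a : 'I_n -> R) (X : R) :=
  #|[pred e : {ffun 'I_n -> bool} | (\sum_i sg (e i) * a i)%R == X]|.

Lemma oneD n : forall (k : nat) (a : 'I_n -> R) (c X : R),
  0 <= c -> (forall i, a i != 0) -> (forall i, `|a i| <= c) ->
  (k == 0)%N || (k.-1%:R * c < `|X|) ->
  (cnt a X <= 'C(n, uphalf (n + k)))%N.
Proof.
rewrite /cnt.
elim: n => [|n IH] k a c X c0 anz ac hk.
  case: k hk => [_|k hk].
    apply: leq_trans (max_card _) _; by rewrite card_ffun !card_ord.
  rewrite leqn0; apply/eqP/eq_card0 => e; rewrite !inE big_ord0.
  apply/negP => /eqP X0; move: hk; rewrite /= -X0 normr0.
  by rewrite ltNge mulr_ge0.
have [i0 hmax] : exists i0 : 'I_n.+1, forall i, `|a i| <= `|a i0|.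
  by case: (arg_maxP (i0:=ord0) (P:=xpredT) (fun i => `|a i|) isT) => i _ h; exists i => j; apply: h.
have hb : 0 < `|a i0| by rewrite normr_gt0.
have bc : `|a i0| <= c := ac i0.
rewrite (split_card i0).
set b := `|a i0| in hmax hb bc *.
have IHa := fun k Y h => IH k (fun j => a (lift i0 j)) b Y (ltW hb) (fun j => anz _) (fun j => hmax _) h.
have key : forall Y1 Y2, `|X| + b = `|Y1| -> `|X| - b <= `|Y2| ->
   (#|[pred f : {ffun 'I_n -> bool} | (\sum_j sg (f j) * a (lift i0 j))%R == Y1]| +
    #|[pred f : {ffun 'I_n -> bool} | (\sum_j sg (f j) * a (lift i0 j))%R == Y2]| <=
    'C(n.+1, uphalf (n.+1 + k)))%N.
  move=> Y1 Y2 h1 h2.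
  case: k hk => [_|k hk].
    rewrite -binL0; apply: leq_add; apply: IHa => //=.
    by rewrite mul0r -h1 ltr_pwDr // normr_ge0.
  rewrite /= in hk.
  have kb : k%:R * b <= k%:R * c by rewrite ler_wpM2l.
  rewrite -binL1; apply: leq_add; apply: IHa => /=.
    by rewrite -h1 mulrSr mulrDl mul1r ltrD2r (le_lt_trans kb).
  case: k hk kb => [//|k] hk kb /=.
  apply: lt_le_trans h2.
  by rewrite ltrBrDr -[X in _ + X]mul1r -mulrDl -mulrSr (le_lt_trans kb).
case: (absPM X (a i0)) => [[e1 e2]|[e1 e2]].
  exact: key.
rewrite addnC; exact: key.
Qed.

Lemma Rn_sum n (e : {ffun 'I_n -> bool}) :
  Rn R e = (#|[set i | e i]|.*2)%:R - n%:R.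
Proof.
have -> : #|[set i | e i]| = (\sum_i (e i : nat))%N.
  by rewrite -sum1_card big_mkcond /=; apply: eq_bigr => i _; rewrite inE; case: (e i).
rewrite /Rn -muln2 natrM natr_sum mulr_suml.
have -> : n%:R = \sum_(i < n) (1 : R) by rewrite sumr_const card_ord.
rewrite -sumrB; apply: eq_bigr => i _; rewrite /Pilot.Defs.rad; case: (e i) => /=.
  by rewrite mul1r [2%:R]/= (addrK 1 1) .
by rewrite mul0r sub0r.
Qed.

Lemma card_sets n u :
  #|[pred e : {ffun 'I_n -> bool} | #|[set i | e i]| == u]| = 'C(n, u).
Proof.
rewrite -[in RHS](card_ord n) -card_draws -!sum1_card.
rewrite (reindex (fun A : {set 'I_n} => [ffun i => i \in A])) /=; last first.
  exists (fun e : {ffun 'I_n -> bool} => [set i | e i]) => [A _|e _].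
    by apply/setP => i; rewrite inE ffunE.
  by apply/ffunP => i; rewrite ffunE inE.
apply: eq_bigl => A; rewrite !inE; congr (_ == _); apply: eq_card => i.
by rewrite !inE ffunE.
Qed.

Lemma part2 n k : #|[pred e : {ffun 'I_n -> bool} | Rn R e == (k + delta n k)%:R]| =
  'C(n, uphalf (n + k)).
Proof.
rewrite -card_sets; apply: eq_card => e; rewrite !inE Rn_sum subr_eq -natrD eqr_nat.
rewrite /delta uphalf_half; have := odd_double_half (n + k).
move: (n + k)./2 => q; case: (odd (n + k)) => /= h; rewrite -!muln2 in h *;
  apply/eqP/eqP; lia.
Qed.

Section Geo.
Variable d : nat.
Definition dot (u w : 'rV[R]_d) : R := \sum_j u 0 j * w 0 j.
Definition sq (u : 'rV[R]_d) : R := \sum_j u 0 j ^+ 2.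

Lemma dot_Sn n (v : 'I_n -> 'rV[R]_d) e w :
  dot (Sn v e) w = \sum_i sg (e i) * dot (v i) w.
Proof.
rewrite /dot /Sn; under eq_bigr => j _ do rewrite summxE mulr_suml.
rewrite exchange_big /=; apply: eq_bigr => i _; rewrite mulr_sumr.
by apply: eq_bigr => j _; rewrite mxE mulrA.
Qed.

Lemma sq_ge0 (u : 'rV[R]_d) : 0 <= sq u.
Proof. by apply: sumr_ge0 => j _; rewrite sqr_ge0. Qed.

Lemma entry_le (u : 'rV[R]_d) j : u 0 j ^+ 2 <= sq u.
Proof.
rewrite /sq (bigD1 j) //= lerDl; apply: sumr_ge0 => i _; exact: sqr_ge0.
Qed.

Lemma entry_bound (u : 'rV[R]_d) j B : 0 <= B -> sq u <= B ^+ 2 -> `|u 0 j| <= B.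
Proof.
move=> B0 h; have h1 := le_trans (entry_le u j) h.
have h2 : `|u 0 j| ^+ 2 = u 0 j ^+ 2 by rewrite real_normK // num_real.
have h3 := normr_ge0 (u 0 j).
nra.
Qed.

Lemma amgm_dot (r : R) (u y : 'rV[R]_d) : 0 < r -> `|dot u y| <= (r * sq u + sq y / r) / 2.
Proof.
move=> r0.
have H : forall u, dot u y <= (r * sq u + sq y / r) / 2.
  move=> u'; rewrite /dot /sq.
  have -> : (r * \sum_j u' 0 j ^+ 2 + (\sum_j y 0 j ^+ 2) / r) / 2 =
      \sum_j (r * u' 0 j ^+ 2 + y 0 j ^+ 2 / r) / 2.
    by rewrite -mulr_suml big_split /= -mulr_sumr -mulr_suml.
  apply: ler_sum => j _.
  have -> : (r * u' 0 j ^+ 2 + y 0 j ^+ 2 / r) / 2 =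
     u' 0 j * y 0 j + (r * u' 0 j - y 0 j) ^+ 2 / (2 * r).
    by field; rewrite gt_eqF.
  rewrite lerDl; apply: divr_ge0; [exact: sqr_ge0| apply: mulr_ge0 => //; exact: ltW].
rewrite ler_norml H andbT.
have := H (- u); rewrite /dot /sq.
have -> : \sum_j (- u) 0 j * y 0 j = - \sum_j u 0 j * y 0 j.
  by rewrite -sumrN; apply: eq_bigr => j _; rewrite mxE mulNr.
have -> : \sum_j (- u) 0 j ^+ 2 = \sum_j u 0 j ^+ 2.
  by apply: eq_bigr => j _; rewrite mxE sqrrN.
by rewrite lerNl.
Qed.

Lemma pow_sum_bound (u : 'rV[R]_d) B t : 0 <= t -> t <= 1 -> (forall j, `|u 0 j| <= B) ->
  `|\sum_j u 0 j * t ^+ j.+1| <= d%:R * B * t.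
Proof.
move=> t0 t1 hB; apply: le_trans (ler_norm_sum _ _ _) _.
have -> : d%:R * B * t = \sum_(j < d) (B * t) by rewrite sumr_const card_ord mulr_natl mulrnAl.
apply: ler_sum => j _; rewrite normrM normrX (ger0_norm t0).
have h1 : t ^+ j <= 1 := exprn_ile1 _ t0 t1.
have h2 : 0 <= t ^+ j := exprn_ge0 _ t0.
have h3 := normr_ge0 (u 0 j); have h4 := hB j.
rewrite exprS; apply: ler_pM => //; first exact: mulr_ge0.
by rewrite -[leRHS]mulr1; apply: ler_wpM2l.
Qed.
End Geo.

Lemma poly_avoid (q : {poly R}) t0 : q != 0 -> 0 < t0 ->
  exists t, [/\ 0 < t, t <= t0 & q.[t] != 0].
Proof.
move=> qn t0p.
set rs := [seq t0 / (i.+1)%:R | i <- iota 0 (size q)].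
have hu : uniq rs.
  rewrite map_inj_in_uniq ?iota_uniq // => i j _ _ /(mulfI (lt0r_neq0 t0p)).
  by move/invr_inj/eqP; rewrite eqr_nat => /eqP [].
have [hall|/allPn [t /mapP [i _ ->] hr]] := boolP (all (root q) rs).
  have := max_poly_roots qn hall hu.
  by rewrite size_map size_iota ltnn.
exists (t0 / (i.+1)%:R); split.
- by rewrite divr_gt0 // ltr0n.
- by rewrite ler_pdivrMr ?ltr0n // -{1}[t0]mulr1 (ler_wpM2l (ltW t0p)) // -natr1 addrC lerDl ler0n.
- by move: hr; rewrite rootE.
Qed.

Lemma exists_dir d n (v : 'I_n -> 'rV[R]_d) (x : 'rV[R]_d) (K r : R) :
  (forall i, v i != 0) -> (forall i, sq (v i) <= 1) -> 0 < r -> sq x = r ^+ 2 ->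
  0 <= K -> K < r ->
  exists w : 'rV[R]_d, exists c : R,
    [/\ 0 <= c, forall i, dot (v i) w != 0, forall i, `|dot (v i) w| <= c
      & K * c < `|dot x w|].
Proof.
move=> vnz v1 r0 xr K0 Kr.
pose D : R := d%:R.
have hD : 0 <= D := ler0n _ _.
have hDK : 0 <= D * (K + r) by rewrite mulr_ge0 // addr_ge0 // ltW.
pose t0 := Num.min 1 (r * (r - K) / (2 * (D * (K + r) + 1))).
have t0p : 0 < t0.
  rewrite lt_min ltr01 /= divr_gt0 //; first by rewrite mulr_gt0 // subr_gt0.
  lra.
pose q i := Poly (dot (v i) x :: [seq v i 0 j | j <- enum 'I_d]).
have qE : forall i t, (q i).[t] = dot (v i) x + \sum_j v i 0 j * t ^+ j.+1.
  move=> i t; rewrite (@horner_coef_wide _ d.+1); last first.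
    by apply: leq_trans (size_Poly _) _; rewrite /= size_map size_enum_ord.
  rewrite big_ord_recl coef_Poly /= expr0 mulr1; congr (_ + _).
  apply: eq_bigr => j _; rewrite coef_Poly /= (nth_map j) ?size_enum_ord ?add0n //.
  by rewrite nth_ord_enum.
have qnz : forall i, q i != 0.
  move=> i; apply: contraNneq (vnz i) => qi0; apply/eqP/rowP => j; rewrite mxE.
  have := congr1 (fun p : {poly R} => p`_j.+1) qi0.
  by rewrite coef0 coef_Poly /= (nth_map j) ?size_enum_ord // nth_ord_enum.
have Qnz : \prod_i q i != 0 by apply/prodf_neq0 => i _; exact: qnz.
have [t [tp tt0 Qt]] := poly_avoid Qnz t0p.
have t1 : t <= 1 by apply: le_trans tt0 _; rewrite /t0 ge_min lexx.
have t2 : t <= r * (r - K) / (2 * (D * (K + r) + 1)).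
  by apply: le_trans tt0 _; rewrite /t0 ge_min lexx orbT.
have qt : forall i, (q i).[t] != 0.
  by move: Qt; rewrite horner_prod => /prodf_neq0 h i; exact: h.
pose w := \row_j (x 0 j + t ^+ j.+1).
have dotw : forall u, dot u w = dot u x + \sum_j u 0 j * t ^+ j.+1.
  by move=> u; rewrite /dot -big_split; apply: eq_bigr => j _; rewrite mxE mulrDr.
exists w, (r + D * t); split.
- by rewrite addr_ge0 ?mulr_ge0 // ltW.
- by move=> i; rewrite dotw -qE; exact: qt.
- move=> i; rewrite dotw; apply: le_trans (ler_normD _ _) _; apply: lerD.
    apply: le_trans (amgm_dot _ _ r0) _; have := v1 i; rewrite xr expr2 mulfK ?gt_eqF //.
    move=> h; nra.
  have := pow_sum_bound (u:=v i) (B:=1) (ltW tp) t1.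
  rewrite mulr1; apply => k; apply: entry_bound; rewrite ?expr1n //.
have hx : `|\sum_j x 0 j * t ^+ j.+1| <= D * r * t.
  apply: pow_sum_bound (ltW tp) t1 _ => j; apply: entry_bound; [exact: ltW | by rewrite xr].
have dxx : dot x x = r ^+ 2 by rewrite -xr /dot /sq; apply: eq_bigr => j _; rewrite expr2.
rewrite dotw dxx.
move: hx; set s := \sum_j _ => hx.
have hs : - (D * r * t) <= s by move: hx; rewrite ler_norml => /andP [].
have hn : r ^+ 2 + s <= `|r ^+ 2 + s| := ler_norm _.
move: t2; rewrite ler_pdivlMr; last by lra.
move=> t2.
apply: lt_le_trans hn.
nra.
Qed.
End OneD.

Unset Implicit Arguments.

Theorem theorem2 (R : realType) (d n : nat) (hd : (1 <= d)%N) (hn : (1 <= n)%N)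
  (v : 'I_n -> 'rV[R]_d)
  (hv0 : forall i, v i != 0) (hv1 : forall i, enorm (v i) <= 1)
  (x : 'rV[R]_d) (hx : x != 0) :
  let k : nat := `|Num.ceil (enorm x)|%N in
  prob R [pred e | Sn v e == x]
    <= prob R [pred e : {ffun 'I_n -> bool} | Rn R e == (k + delta n k)%:R]
  /\ prob R [pred e : {ffun 'I_n -> bool} | Rn R e == (k + delta n k)%:R]
     = 'C(n, uphalf (n + k))%:R / 2 ^+ n.
Proof.
move=> k.
have P2 : prob R [pred e : {ffun 'I_n -> bool} | Rn R e == (k + delta n k)%:R]
     = 'C(n, uphalf (n + k))%:R / 2 ^+ n by rewrite /prob part2.
split => //; rewrite P2 /prob.
set r := enorm x.
have rE : r = Num.sqrt (sq x) by [].
have sqx0 : 0 < sq x.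
  have [j hj] : exists j, x 0 j != 0.
    apply/existsP; apply: contraNT hx; rewrite negb_exists => /forallP h.
    by apply/eqP/rowP => j; rewrite mxE; move: (h j); rewrite negbK => /eqP.
  apply: lt_le_trans (entry_le x j); by rewrite lt_def sqr_ge0 sqrf_eq0 hj.
have r0 : 0 < r by rewrite rE sqrtr_gt0.
have xr : sq x = r ^+ 2 by rewrite rE sqr_sqrtr // ltW.
have v1 : forall i, sq (v i) <= 1.
  move=> i; have := hv1 i; rewrite /enorm -/(sq (v i)) => h.
  have h0 := sq_ge0 (v i); have h1 := sqr_sqrtr h0.
  have h2 := sqrtr_ge0 (sq (v i)); nra.
have hc : 0 < Num.ceil r by rewrite ceil_gt0.
have hk : k%:Z = Num.ceil r by rewrite /k gez0_abs // ltW.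
have Kr : k.-1%:R < r.
  have k1 : (0 < k)%N by rewrite -ltz_nat hk.
  have := ceilB1_lt r; rewrite -hk; move: k1; case: (k) => [//|k'] _ /=.
  by rewrite -addn1 PoszD addrK.
have [w [c [c0 hnz hle hX]]] := exists_dir hv0 v1 r0 xr (ler0n _ _) Kr.
apply: ler_wpM2r; first by rewrite invr_ge0 exprn_ge0.
rewrite ler_nat; apply: (@leq_trans (cnt (fun i => dot (v i) w) (dot x w))).
  apply/subset_leq_card/subsetP => e; rewrite !inE => /eqP <-.
  by rewrite dot_Sn.
by apply: oneD c0 hnz hle _; rewrite hX orbT.
Qed.
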